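(* Let $\mathcal{H}$ be a finite family of digraphs, $h=\max_{H\in\mathcal{H}}|V(H)|$, and let $p\ge1$ be an integer. If $H^*\in\mathcal{H}^-_p$, then $|V(H^* )|\le h+(p-1)h^2$.
   Context: For a digraph $H$, $GPC(H)$ (good path completions) is the set of strongly connected digraphs of the form $H\cup P_1\cup\dots\cup P_\ell$ (union of vertex and arc sets), where each $P_i$ is a directed path with both end-points in $V(H)$ and the ordered pairs of end-points of the $P_i$ are pairwise distinct; $\{P_1,\dots,P_\ell\}$ is a witnessing collection of paths. $GPC(\mathcal{H})=\bigcup_{H\in\mathcal{H}}GPC(H)$. $\mathcal{H}^-_p$ is the set of digraphs in $GPC(\mathcal{H})$ that admit (for some $H\in\mathcal{H}$) a witnessing collection of paths all of length at most $p-1$, and $\mathcal{H}^+_p=GPC(\mathcal{H})\setminus\mathcal{H}^-_p$. *)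

(* Defs.v *)
From mathcomp Require Import all_boot.
Set Implicit Arguments. Unset Strict Implicit. Unset Printing Implicit Defensive.

Record digraph (T : finType) := Digraph {
  dV : {set T};
  dA : {set T * T};
  dA_sub : dA \subset setX dV dV }.

Section Defs.
Variable T : finType.

Definition strongly_connected (G : digraph T) : Prop :=
  forall u v, u \in dV G -> v \in dV G -> connect (fun x y => (x, y) \in dA G) u v.

(* A directed path is given by its sequence of (pairwise distinct) vertices
   v_0 ... v_k with k >= 1; its arcs are (v_i, v_{i+1}); its length is k. *)
Definition is_dipath (s : seq T) : bool := uniq s && (1 < size s).
Definition path_verts (s : seq T) : {set T} := [set x in s].
Definition path_arcs (s : seq T) : {set T * T} := [set e in zip s (behead s)].
Definition path_len (s : seq T) : nat := (size s).-1.
Definition path_ends (s : seq T) : option (T * T) :=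
  if s is x :: s' then Some (x, last x s') else None.

(* {P_1,...,P_l} (given by ps) is a witnessing collection of paths for
   Hs being a good path completion of H. *)
Definition witnesses (H Hs : digraph T) (ps : seq (seq T)) : Prop :=
  [/\ (forall s, s \in ps -> is_dipath s),
      (forall s, s \in ps -> forall x y, path_ends s = Some (x, y) ->
                            x \in dV H /\ y \in dV H),
      uniq (map path_ends ps),
      (dV Hs = dV H :|: (\bigcup_(s <- ps) path_verts s) /\
       dA Hs = dA H :|: (\bigcup_(s <- ps) path_arcs s)) &
      strongly_connected Hs].

Definition GPC (H Hs : digraph T) : Prop := exists ps, witnesses H Hs ps.

(* list membership (digraph T has no decidable equality) *)
Fixpoint inl (H : digraph T) (fam : seq (digraph T)) : Prop :=
  if fam is G :: fam' then G = H \/ inl H fam' else False.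

Definition in_Hminus (fam : seq (digraph T)) (p : nat) (Hs : digraph T) : Prop :=
  exists2 H, inl H fam & exists ps, witnesses H Hs ps /\
             forall s, s \in ps -> path_len s <= p - 1.

End Defs.

(* Main.v *)
Require Import Defs.
From mathcomp Require Import all_boot.
Set Implicit Arguments.
Unset Strict Implicit.

Lemma cardU_le (T : finType) (A B : {set T}) : #|A :|: B| <= #|A| + #|B|.
Proof. by rewrite cardsU leq_subr. Qed.

Lemma inl_max (T : finType) (H : digraph T) fam :
  inl H fam -> #|dV H| <= \max_(G <- fam) #|dV G|.
Proof.
elim: fam => [|G fam IH] //= [<-|/IH h]; rewrite big_cons.
  by rewrite leq_maxl.
by rewrite (leq_trans h) // leq_maxr.
Qed.

Lemma union_bound (T : finType) (A : {set T}) (ps : seq (seq T)) k :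
  (forall s, s \in ps -> is_dipath s) ->
  (forall s, s \in ps -> forall x y, path_ends s = Some (x, y) -> x \in A /\ y \in A) ->
  (forall s, s \in ps -> path_len s <= k) ->
  #|(\bigcup_(s <- ps) path_verts s) :\: A| <= size ps * k.
Proof.
elim: ps => [|s ps IH] hd he hl.
  by rewrite big_nil set0D cards0.
rewrite big_cons setDUl /= mulSn.
apply: (leq_trans (cardU_le _ _)); apply: leq_add; last first.
  have sub t : t \in ps -> t \in s :: ps by rewrite inE => ->; rewrite orbT.
  by apply: IH => t /sub; [exact: hd | exact: he | exact: hl].
have hs : s \in s :: ps by rewrite inE eqxx.
case: s hd he hl hs => [|x s'] hd he hl hs.
  by move: (hd _ hs).
have [hx _] := he _ hs x (last x s') erefl.
have hsub : path_verts (x :: s') :\: A \subset [set y in s'].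
  apply/subsetP => y; rewrite !inE => /andP [hyA].
  by case/orP => // /eqP yx; move: hyA; rewrite yx hx.
apply: (leq_trans (subset_leq_card hsub)).
rewrite cardsE (leq_trans (card_size _)) //.
exact: (hl _ hs).
Qed.

Lemma size_bound (T : finType) (A : {set T}) (ps : seq (seq T)) :
  (forall s, s \in ps -> is_dipath s) ->
  (forall s, s \in ps -> forall x y, path_ends s = Some (x, y) -> x \in A /\ y \in A) ->
  uniq (map (@path_ends T) ps) ->
  size ps <= #|A| ^ 2.
Proof.
move=> hd he hu.
rewrite -(size_map (@path_ends T)) expnS expn1 -cardsX cardE -(size_map (@Some (T * T)) (enum _)).
apply: (uniq_leq_size hu) => o /mapP [s hs ->].
case: s hs => [|x s'] hs; first by move: (hd _ hs).
have [hx hy] := he _ hs x (last x s') erefl.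
apply/mapP; exists (x, last x s') => //.
by rewrite mem_enum inE hx hy.
Qed.

Theorem lemma21 (T : finType) (fam : seq (digraph T)) (p : nat) (Hs : digraph T) :
  1 <= p -> in_Hminus fam p Hs ->
  #|dV Hs| <= (\max_(H <- fam) #|dV H|) + (p - 1) * (\max_(H <- fam) #|dV H|) ^ 2.
Proof.
move=> _ [H hH [ps [[hd he hu [hV _] _] hl]]].
set h := \max_(H <- fam) #|dV H|.
have hm : #|dV H| <= h := inl_max hH.
set B := \bigcup_(s <- ps) path_verts s.
have hsub : dV H :|: B \subset dV H :|: (B :\: dV H).
  apply/subsetP => y; rewrite !inE.
  by case: (y \in dV H) => //=.
rewrite hV; apply: (leq_trans (subset_leq_card hsub)).
apply: (leq_trans (cardU_le _ _)); apply: leq_add => //.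
apply: (leq_trans (union_bound hd he hl)).
rewrite mulnC; apply: leq_mul => //.
apply: (leq_trans (size_bound hd he hu)).
by rewrite leq_exp2r.
Qed.
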